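(* In the #-KEG, suppose that the IA algorithm $\mathcal{A}$, whenever the remaining external graph $(V,E^I(\mathbf{M}))$ has several maximum-cardinality matchings, selects one that lexicographically maximizes the numbers of matched vertices of the players taken in non-increasing order of their number of revealed vertices (i.e. it first maximizes the number of matched vertices of the player with the most revealed vertices, then of the second, etc.), this rule being applied in whatever game results from the players' revelations. Then no player has a strict incentive to hide vertices: for every player $p$, every profile $M^{-p}$ of matchings of the opponents' graphs, and every subset $V'\subseteq V^p$, the maximum utility player $p$ can achieve (over matchings $M^p$ of $G^p$) when all her vertices are revealed is at least $2\nu(G^p[V'])$ plus the maximum utility she can achieve (over matchings of $G^p-V'$) in the game in which the vertices of $V'$ and their incident edges are removed, where $\nu(G^p[V'])$ is the size of a maximum matching of the subgraph of $G^p$ induced by $V'$.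
   Context: The #-KEG: $N=\{1,\dots,n\}$ is a finite set of players; player $p$ has internal graph $G^p=(V^p,E^p)$ (vertex sets pairwise disjoint); $E^I$ is a set of external edges each joining vertices of two different players; $G=(V,E)$ with $V=\bigcup_pV^p$, $E=E^I\cup\bigcup_pE^p$. A strategy of player $p$ is a matching $M^p$ of $G^p$. Given $\mathbf{M}=(M^1,\dots,M^n)$, $E^I(\mathbf{M})$ is the set of external edges with both endpoints uncovered by $\bigcup_pM^p$, and the IA selects a maximum-cardinality matching $M^I=\mathcal{A}(\mathbf{M})$ of $(V,E^I(\mathbf{M}))$ via a deterministic algorithm $\mathcal{A}$. With $M^I_p$ the edges of $M^I$ incident to $V^p$, player $p$'s utility is $2|M^p|+|M^I_p|$. Hiding a set $V'\subseteq V^p$ means that the game is played on $G$ with $V'$ and all edges incident to $V'$ removed, while player $p$ can additionally match the hidden vertices among themselves using edges of $G^p$ inside $V'$, each such internal edge adding 2 to her utility. *)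

(* Defs.v *)
From mathcomp Require Import all_boot.
Set Implicit Arguments. Unset Strict Implicit. Unset Printing Implicit Defensive.

Section KEG.
Variables (n : nat) (V : finType) (owner : V -> 'I_n) (adj : rel V).

Definition is_edge (r : rel V) (e : {set V}) : bool :=
  [exists u, exists v, r u v && (e == [set u; v])].

Definition is_matching (r : rel V) (M : {set {set V}}) : bool :=
  [forall e in M, is_edge r e] &&
  [forall e1 in M, forall e2 in M, (e1 != e2) ==> [disjoint e1 & e2]].

Definition covered (M : {set {set V}}) : {set V} := \bigcup_(e in M) e.

Definition maximum_matching (r : rel V) (M : {set {set V}}) : Prop :=
  is_matching r M /\ forall N, is_matching r N -> #|N| <= #|M|.

Definition nu (r : rel V) : nat := \max_(N : {set {set V}} | is_matching r N) #|N|.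

(* Game played on the revealed vertex set R (edges incident to V \ R removed). *)
Definition intr (R : {set V}) (q : 'I_n) : rel V :=
  fun u v => [&& u \in R, v \in R, adj u v, owner u == q & owner v == q].
Definition extr (R : {set V}) : rel V :=
  fun u v => [&& u \in R, v \in R, adj u v & owner u != owner v].

Definition profile := {ffun 'I_n -> {set {set V}}}.

Definition valid_profile (R : {set V}) (M : profile) : Prop :=
  forall q, is_matching (intr R q) (M q).

Definition all_covered (M : profile) : {set V} := \bigcup_(q : 'I_n) covered (M q).

Definition ext_rem (R : {set V}) (M : profile) : rel V :=
  fun u v => [&& extr R u v, u \notin all_covered M & v \notin all_covered M].

Definition nrevealed (R : {set V}) (q : 'I_n) : nat := #|[set v in R | owner v == q]|.

Definition nmatched (M : {set {set V}}) (q : 'I_n) : nat :=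
  #|[set v in covered M | owner v == q]|.

Definition incident (M : {set {set V}}) (q : 'I_n) : {set {set V}} :=
  [set e in M | [exists v in e, owner v == q]].

Fixpoint lex_le (a b : seq nat) : bool :=
  match a, b with
  | x :: a', y :: b' => (x < y) || ((x == y) && lex_le a' b')
  | _, _ => true
  end.

(* The IA rule: A R M is a maximum matching of (R, E^I(M)) that lexicographically
   maximizes the matched-vertex counts of players listed in non-increasing order
   of their number of revealed vertices (ties in any order). *)
Definition lex_IA (A : {set V} -> profile -> {set {set V}}) : Prop :=
  forall (R : {set V}) (M : profile), valid_profile R M ->
    exists s : seq 'I_n,
      [/\ perm_eq s (enum 'I_n),
          sorted (fun q q' => nrevealed R q' <= nrevealed R q) s,
          maximum_matching (ext_rem R M) (A R M) &
          forall N, maximum_matching (ext_rem R M) N ->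
            lex_le [seq nmatched N q | q <- s] [seq nmatched (A R M) q | q <- s]].

Definition upd (M : profile) (p : 'I_n) (Mp : {set {set V}}) : profile :=
  [ffun q => if q == p then Mp else M q].

Definition utility (A : {set V} -> profile -> {set {set V}}) (R : {set V})
    (M : profile) (p : 'I_n) : nat :=
  2 * #|M p| + #|incident (A R M) p|.

Definition best_utility (A : {set V} -> profile -> {set {set V}}) (R : {set V})
    (Mopp : profile) (p : 'I_n) : nat :=
  \max_(Mp : {set {set V}} | is_matching (intr R p) Mp) utility A R (upd Mopp p Mp) p.

End KEG.

(* Main.v *)
Require Import Defs.
From mathcomp Require Import all_boot.
Set Implicit Arguments. Unset Strict Implicit. Unset Printing Implicit Defensive.


Section Match.
Variable V : finType.

Definition mate (M : {set {set V}}) (v : V) : V :=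
  match [pick e in M | v \in e] with
  | Some e => match [pick u in e | u != v] with Some u => u | None => v end
  | None => v end.

Variables (r : rel V) (rsym : symmetric r) (rirr : irreflexive r).

Lemma edgeP M e : is_matching r M -> e \in M ->
  exists u w, [/\ r u w, u != w & e = [set u; w]].
Proof.
case/andP=> /forallP H _ eM; have := H e; rewrite eM /= => /existsP[u /existsP[w /andP[ruw /eqP ->]]].
exists u, w; split=> //; apply/negP=> /eqP uw; by rewrite uw rirr in ruw.
Qed.

Lemma match_disj M e1 e2 : is_matching r M -> e1 \in M -> e2 \in M -> e1 != e2 ->
  [disjoint e1 & e2].
Proof.
case/andP=> _ /forallP H e1M e2M ne; have := H e1; rewrite e1M /= => /forallP/(_ e2).
by rewrite e2M ne.
Qed.

Lemma match_eq M e1 e2 v : is_matching r M -> e1 \in M -> e2 \in M -> v \in e1 -> v \in e2 -> e1 = e2.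
Proof.
move=> hM e1M e2M v1 v2; apply/eqP; apply/negPn/negP => ne.
have := match_disj hM e1M e2M ne; move/disjoint_setI0/setP/(_ v); by rewrite !inE v1 v2.
Qed.

Lemma set2_eq (u w x y : V) : x \in [set u; w] -> y \in [set u; w] -> x != y ->
  [set u; w] = [set x; y].
Proof.
rewrite !inE => /orP[]/eqP-> /orP[]/eqP-> //; rewrite ?eqxx // => _.
by apply/setP=> z; rewrite !inE orbC.
Qed.

Lemma mateP M e v : is_matching r M -> e \in M -> v \in e ->
  e = [set v; mate M v] /\ mate M v != v.
Proof.
move=> hM eM ve.
have [u [w [ruw uw E]]] := edgeP hM eM.
have [mv mn] : mate M v \in e /\ mate M v != v.
  rewrite /mate; case: pickP => [e' /andP[e'M ve'] | H]; last first.
    by have := H e; rewrite eM ve.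
  have -> := match_eq hM e'M eM ve' ve.
  case: pickP => [u' /andP[] // | H].
  move: ve; rewrite E !inE => /orP[]/eqP vE; subst v.
    by have := H w; rewrite E !inE eqxx orbT eq_sym uw.
  by have := H u; rewrite E !inE eqxx /= uw.
split=> //; rewrite E; apply: set2_eq; rewrite -?E // eq_sym //.
Qed.

Lemma covP (M : {set {set V}}) v : reflect (exists2 e, e \in M & v \in e) (v \in covered M).
Proof. by rewrite /covered; apply: (iffP bigcupP) => [[e ? ?]|[e ? ?]]; exists e. Qed.

Lemma mate_notcov (M : {set {set V}}) v : v \notin covered M -> mate M v = v.
Proof.
move=> nv; rewrite /mate; case: pickP => // e /andP[eM ve].
by case/negP: nv; apply/covP; exists e.
Qed.

Lemma mate_cov M v : is_matching r M -> (mate M v != v) = (v \in covered M).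
Proof.
move=> hM; case: (boolP (v \in covered M)) => [/covP[e eM ve]|nv].
  by case: (mateP hM eM ve).
by rewrite mate_notcov // eqxx.
Qed.

Lemma mate_edge M v : is_matching r M -> v \in covered M -> [set v; mate M v] \in M.
Proof. by move=> hM /covP[e eM ve]; case: (mateP hM eM ve) => <-. Qed.

Lemma mateK M : is_matching r M -> involutive (mate M).
Proof.
move=> hM v; case: (boolP (v \in covered M)) => [/covP[e eM ve]|nv]; last by rewrite !mate_notcov.
have [E1 n1] := mateP hM eM ve.
have we : mate M v \in e by rewrite E1 !inE eqxx orbT.
have [E2 n2] := mateP hM eM we.
have : mate M (mate M v) \in e by rewrite E2 !inE eqxx orbT.
by rewrite E1 !inE (negbTE n2) orbF => /eqP.
Qed.

Lemma mate_r M v : is_matching r M -> v \in covered M -> r v (mate M v).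
Proof.
move=> hM vc; have eM := mate_edge hM vc; have [u [w [ruw uw E]]] := edgeP hM eM.
have n : mate M v != v by rewrite mate_cov.
have h1 : v \in [set u; w] by rewrite -E !inE eqxx.
have h2 : mate M v \in [set u; w] by rewrite -E !inE eqxx orbT.
move: n h1 h2; move: (mate M v) => m n.
rewrite !inE => /orP[]/eqP vE /orP[]/eqP mE; subst v m; rewrite ?eqxx // in n.
all: try by move: ruw; rewrite rsym.
Qed.

Lemma card_covered (M : {set {set V}}) : is_matching r M -> #|covered M| = 2 * #|M|.
Proof.
move=> hM.
have tP : trivIset M.
  apply/trivIsetP => e1 e2 e1M e2M; exact: match_disj hM e1M e2M.
have -> : covered M = cover M by []. move: tP; rewrite /trivIset => /eqP <-.
rewrite (eq_bigr (fun _ => 2)); first by rewrite sum_nat_const mulnC. move=> e eM.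
by have [u [w [_ uw ->]]] := edgeP hM eM; rewrite cards2 uw.
Qed.

End Match.


Section Swap.
Variable V : finType.
Variables (r1 r2 r : rel V) (s1 : symmetric r1) (i1 : irreflexive r1)
  (s2 : symmetric r2) (i2 : irreflexive r2).
Variables (N1 N2 : {set {set V}}) (C : {set V}).
Hypotheses (h1 : is_matching r1 N1) (h2 : is_matching r2 N2).
Hypothesis hC : forall v, v \in C -> (mate N1 v \in C) && (mate N2 v \in C).
Hypothesis hr1 : forall u v, r1 u v -> u \notin C -> v \notin C -> r u v.
Hypothesis hr2 : forall u v, r2 u v -> u \in C -> v \in C -> r u v.

Definition swap := [set f in N1 | f \subset ~: C] :|: [set f in N2 | f \subset C].

Lemma mate1_out v : v \notin C -> mate N1 v \notin C.
Proof.
move=> vC; apply/negP=> mC; have := hC mC; rewrite (mateK i1 h1) => /andP[].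
by rewrite (negbTE vC).
Qed.

Lemma disj_CC (A B : {set V}) : A \subset ~: C -> B \subset C -> [disjoint A & B].
Proof.
move=> hA hB; rewrite disjoint_subset; apply/subsetP=> x xA.
have := subsetP hA x xA; rewrite !inE; apply: contra; exact: (subsetP hB).
Qed.

Lemma swap_matching : is_matching r swap.
Proof.
apply/andP; split.
  apply/forallP=> e; apply/implyP; rewrite !inE => /orP[]/andP[eN eC].
    have [u [w [ruw uw E]]] := edgeP i1 h1 eN.
    move: eC; rewrite E subUset !sub1set !inE => /andP[uC wC].
    by apply/existsP; exists u; apply/existsP; exists w; rewrite hr1 ?E ?eqxx.
  have [u [w [ruw uw E]]] := edgeP i2 h2 eN.
  move: eC; rewrite E subUset !sub1set => /andP[uC wC].
  by apply/existsP; exists u; apply/existsP; exists w; rewrite hr2 ?E ?eqxx.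
apply/forallP=> e1; apply/implyP=> e1S; apply/forallP=> e2; apply/implyP=> e2S.
apply/implyP=> ne; move: e1S e2S; rewrite !inE => /orP[]/andP[e1N e1C] /orP[]/andP[e2N e2C].
- exact: match_disj h1 e1N e2N ne.
- exact: disj_CC.
- by rewrite disjoint_sym; apply: disj_CC.
- exact: match_disj h2 e1N e2N ne.
Qed.

Lemma swap_cov v : (v \in covered swap) = (if v \in C then v \in covered N2 else v \in covered N1).
Proof.
case: ifPn => vC; apply/idP/idP.
- case/covP=> e; rewrite !inE => /orP[]/andP[eN eC] ve.
    by move/subsetP: eC => /(_ v ve); rewrite inE vC.
  by apply/covP; exists e.
- move=> vc; apply/covP; exists [set v; mate N2 v]; last by rewrite !inE eqxx.
  rewrite inE; apply/orP; right; rewrite inE (mate_edge i2 h2 vc) subUset !sub1set vC /=.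
  by have /andP[] := hC vC.
- case/covP=> e; rewrite !inE => /orP[]/andP[eN eC] ve.
    by apply/covP; exists e.
  by move/subsetP: eC => /(_ v ve); rewrite (negbTE vC).
- move=> vc; apply/covP; exists [set v; mate N1 v]; last by rewrite !inE eqxx.
  rewrite inE; apply/orP; left; rewrite inE (mate_edge i1 h1 vc) subUset !sub1set !inE vC /=.
  exact: mate1_out.
Qed.

End Swap.


Section Walk.
Variable V : finType.
Variable m : bool -> V -> V.
Hypothesis hm : forall t, involutive (m t).

Definition step (x : V * bool) : V * bool := (m x.2 x.1, ~~ x.2).
Definition srev (x : V * bool) : V * bool := (x.1, ~~ x.2).
Definition stuck (x : V * bool) : bool := m x.2 x.1 == x.1.

Lemma step_inj : injective step.
Proof.
move=> [v t] [v' t'] [] E Et; have {}Et : t = t' by move: Et; clear E; case: t; case: t'.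
subst t'; by rewrite -(hm t v) E hm.
Qed.

Lemma step_rev_step x : step (srev (step x)) = srev x.
Proof. by case: x => v t; rewrite /step /srev /= negbK hm. Qed.

Lemma iter_rev k x : iter k step (srev (iter k step x)) = srev x.
Proof.
elim: k x => [|k IH] x; first by [].
by rewrite iterSr iterS step_rev_step IH.
Qed.

Lemma exists_stuck b : m false b = b ->
  exists k, (k < #|{: V * bool}|) && stuck (iter k step (b, true)).
Proof.
move=> hb; set s0 := (b, true).
have ho := iter_order step_inj s0.
have o0 := order_gt0 step s0.
move: ho; rewrite -(prednK o0) iterS; set y := iter _ _ _ => E.
exists (order step s0).-1; rewrite -/y.
have -> : (order step s0).-1 < #|{: V * bool}|.
  by rewrite prednK //; apply: max_card.
rewrite /=.
move: E; case: y => u t; rewrite /step /= => -[E1 Et].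
have {}Et : t = false by move: Et; clear E1; case: t.
subst t.
have ub : u = b by rewrite -(hm false u) E1 hb.
by rewrite /stuck /= ub hb.
Qed.

Section OneWalk.
Variables (b : V) (k : nat).
Hypothesis hb0 : m false b = b.
Hypothesis hb1 : m true b != b.
Hypothesis hmin : forall j, j < k -> ~~ stuck (iter j step (b, true)).
Hypothesis hk : stuck (iter k step (b, true)).

Local Notation vv j := (iter j step (b, true)).1.
Local Notation tt j := (iter j step (b, true)).2.

Lemma k_gt0 : 0 < k.
Proof. by case: k hk => // /=; rewrite /stuck /= (negbTE hb1). Qed.

Lemma walk_next j : iter j.+1 step (b, true) = (m (tt j) (vv j), ~~ tt j).
Proof. by rewrite iterS. Qed.

Lemma walk_prev j : 0 < j <= k -> m (~~ tt j) (vv j) = vv j.-1 /\ m (~~ tt j) (vv j) != vv j.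
Proof.
case: j => // i /= ik.
rewrite negbK hm; split=> //.
by have := hmin ik; rewrite /stuck eq_sym.
Qed.

Lemma walk_stay j : j < k -> m (tt j) (vv j) != vv j.
Proof. by move/hmin. Qed.

Lemma walk_end : m (tt k) (vv k) = vv k.
Proof. exact/eqP. Qed.

Definition wset := [set vv (nat_of_ord j) | j : 'I_k.+1].

Lemma wset_closed t v : v \in wset -> m t v \in wset.
Proof.
case/imsetP=> j _ ->; have jk : j <= k by rewrite -ltnS.
case: (boolP (t == tt j)) => [/eqP ->|nt].
  have [jk'|jk'] := ltnP j k.
    rewrite -[(m _ _)]/((m (tt j) (vv j), ~~ tt j).1) -walk_next.
    by apply/imsetP; exists (@Ordinal k.+1 j.+1 jk').
  have jE : nat_of_ord j = k by apply/eqP; rewrite eqn_leq jk jk'.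
  by rewrite jE walk_end; apply/imsetP; exists ord_max.
have tE : t = ~~ tt j by case: t (tt j) nt => -[].
case: (posnP j) => [j0|jp].
  have : tt j = true by rewrite j0.
  by move=> ttj; rewrite tE ttj /= j0 /= hb0; apply/imsetP; exists ord0.
have [E _] := walk_prev (j:=j) (introT andP (conj jp jk)).
rewrite tE E; apply/imsetP; exists (@Ordinal k.+1 j.-1 (leq_ltn_trans (leq_pred _) (ltn_ord j))) => //.
Qed.

Lemma walk_inner j t : 0 < j < k -> m t (vv j) != vv j.
Proof.
case/andP=> jp jk.
case: (boolP (t == tt j)) => [/eqP ->|nt]; first exact: walk_stay.
have tE : t = ~~ tt j by case: t (tt j) nt => -[].
rewrite tE; have := walk_prev (j:=j); by rewrite jp (ltnW jk) => /(_ isT) [_].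
Qed.

End OneWalk.

Lemma walk_inj b b' k k' :
  m false b = b -> m true b != b -> m false b' = b' -> m true b' != b' ->
  (forall j, j < k -> ~~ stuck (iter j step (b, true))) ->
  (forall j, j < k' -> ~~ stuck (iter j step (b', true))) ->
  stuck (iter k step (b, true)) -> stuck (iter k' step (b', true)) ->
  iter k step (b, true) = iter k' step (b', true) -> b = b'.
Proof.
have side : forall b b' k k', m false b = b -> m false b' = b' ->
  (forall j, j < k' -> ~~ stuck (iter j step (b', true))) ->
  iter k step (b, true) = iter k' step (b', true) -> k < k' -> False.
  move=> c c' l l' hc0 hc0' hmin' E lt.
  have d0 : 0 < l' - l by rewrite subn_gt0.
  have E2 : iter l' step (c', true) = iter l step (iter (l' - l) step (c', true)).
    by rewrite -iterD subnKC // ltnW.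
  have := iter_rev l (iter (l' - l) step (c', true)); rewrite -E2 -E iter_rev.
  case X : (iter (l' - l) step (c', true)) => [u t]; rewrite /srev /= => -[cu Et].
  have {Et} tE : t = true by move: Et; clear X; case: t.
  subst u t.
  have := walk_prev hmin' (j := l' - l); rewrite d0 leq_subr X /= => /(_ isT) [_].
  by rewrite hc0 eqxx.
move=> hb0 hb1 hb0' hb1' hmin hmin' hk hk' E.
have [lt|lt|eq] := ltngtP k k'.
- by case: (side _ _ _ _ hb0 hb0' hmin' E lt).
- by case: (side _ _ _ _ hb0' hb0 hmin (esym E) lt).
- subst k'; have := iter_rev k (b, true); rewrite E iter_rev /srev /=.
  by case.
Qed.

End Walk.


Lemma lex_shift (I : eqType) (f g : I -> nat) (p a : I) (s : seq I) :
  a != p -> a \in s -> (forall q, g q + (q == p) = f q + (q == a)) ->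
  lex_le [seq g q | q <- s] [seq f q | q <- s] -> index p s < index a s.
Proof.
move=> ap; elim: s => // q s IH; rewrite inE => as_ hfg /= lxx.
case: (eqVneq q p) => [qp|qp].
  by rewrite qp eq_sym (negbTE ap).
case: (eqVneq q a) => [qa|qa].
  move: lxx; rewrite qa; have := hfg a; rewrite eqxx (negbTE ap) addn0 addn1 => ->.
  by rewrite ltnNge leqnSn eqn_leq ltnn.
move: lxx; have := hfg q; rewrite (negbTE qp) (negbTE qa) !addn0 => ->.
rewrite ltnn eqxx /= => lx; rewrite ltnS; apply: IH => //.
by move: as_; rewrite eq_sym (negbTE qa).
Qed.


Lemma card_setU1_pred (V : finType) (P : pred V) (b : V) (X : {set V}) : b \notin X ->
  #|[set v in b |: X | P v]| = P b + #|[set v in X | P v]|.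
Proof.
move=> bX; case: (boolP (P b)) => Pb.
  have -> : [set v in b |: X | P v] = b |: [set v in X | P v].
    apply/setP=> v; rewrite !inE; case: (eqVneq v b) => [->|] //=; by rewrite Pb.
  by rewrite cardsU1 inE (negbTE bX).
have -> // : [set v in b |: X | P v] = [set v in X | P v].
apply/setP=> v; rewrite !inE; case: (eqVneq v b) => [->|] //=; by rewrite (negbTE Pb) andbF.
Qed.

Section Key.
Variables (n : nat) (V : finType) (owner : V -> 'I_n).
Variables (g gp : rel V) (gs : symmetric g) (gi : irreflexive g)
  (gps : symmetric gp) (gpi : irreflexive gp).
Variables (N Np : {set {set V}}) (W : {set V}) (p : 'I_n) (s sp : seq 'I_n).
Hypothesis hgg : forall u v, g u v -> gp u v.
Hypothesis hgW : forall u v, g u v -> u \notin W.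
Hypothesis hgpg : forall u v, gp u v -> u \notin W -> v \notin W -> g u v.
Hypothesis hW : forall v, v \in W -> owner v = p.
Hypothesis hs : forall q, q \in s.
Hypothesis hsp : forall q, q \in sp.
Hypothesis hord : forall a, a != p -> index p s < index a s -> index a sp < index p sp -> False.
Hypothesis hN : maximum_matching g N.
Hypothesis hNlex : forall N', maximum_matching g N' ->
  lex_le [seq nmatched owner N' q | q <- s] [seq nmatched owner N q | q <- s].
Hypothesis hNp : maximum_matching gp Np.
Hypothesis hNplex : forall N', maximum_matching gp N' ->
  lex_le [seq nmatched owner N' q | q <- sp] [seq nmatched owner Np q | q <- sp].

Let mN := hN.1.
Let mNp := hNp.1.

Definition mm (t : bool) := if t then mate N else mate Np.

Lemma mm_inv t : involutive (mm t).
Proof. rewrite /mm; case: t; [exact: (mateK gi mN) | exact: (mateK gpi mNp)]. Qed.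

Lemma covN v : (v \in covered N) = (mm true v != v).
Proof. by rewrite -(mate_cov gi v mN). Qed.
Lemma covNp v : (v \in covered Np) = (mm false v != v).
Proof. by rewrite -(mate_cov gpi v mNp). Qed.

Lemma nm_shift (M1 M2 : {set {set V}}) b e q : b \notin covered M1 -> e \notin covered M2 ->
  b |: covered M1 = e |: covered M2 ->
  nmatched owner M1 q + (owner b == q) = nmatched owner M2 q + (owner e == q).
Proof.
move=> b1 e2 E; rewrite /nmatched addnC [X in _ = X]addnC.
rewrite -(card_setU1_pred (fun v => owner v == q) b1) -(card_setU1_pred (fun v => owner v == q) e2).
by rewrite E.
Qed.

Section Walk1.
Variables (b : V) (k : nat).
Hypothesis bN : b \in covered N.
Hypothesis bNp : b \notin covered Np.
Hypothesis hmin : forall j, j < k -> ~~ stuck mm (iter j (step mm) (b, true)).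
Hypothesis hk : stuck mm (iter k (step mm) (b, true)).

Let hb0 : mm false b = b.
Proof. by apply/eqP/negbNE; rewrite -covNp. Qed.
Let hb1 : mm true b != b.
Proof. by rewrite -covN. Qed.

Local Notation C := (wset mm b k).

Lemma C_closed v : v \in C -> (mate N v \in C) && (mate Np v \in C).
Proof.
move=> vC; rewrite (wset_closed mm_inv hb0 hmin hk true vC).
exact: (wset_closed mm_inv hb0 hmin hk false vC).
Qed.

Lemma b_in_C : b \in C.
Proof. by apply/imsetP; exists ord0. Qed.

Lemma end_in_C : (iter k (step mm) (b, true)).1 \in C.
Proof. by apply/imsetP; exists ord_max. Qed.

Lemma C_cases v : v \in C ->
  [\/ v = b, v = (iter k (step mm) (b, true)).1 | (v \in covered N) && (v \in covered Np)].
Proof.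
case/imsetP=> j _ ->; have jk : j <= k by rewrite -ltnS.
case: (posnP j) => [->|jp]; first by constructor 1.
have [jk'|jk'] := ltnP j k.
  constructor 3; rewrite covN covNp.
  by rewrite (walk_inner mm_inv hmin) ?jp ?jk' // (walk_inner mm_inv hmin) ?jp ?jk'.
by constructor 2; have -> : nat_of_ord j = k by apply/eqP; rewrite eqn_leq jk jk'.
Qed.

Lemma end_type_true : (iter k (step mm) (b, true)).2 = true.
Proof.
case X : (iter k (step mm) (b, true)) => [e t]; case: t X => // X; exfalso.
have hk' := hk; rewrite X /stuck /= in hk'.
have kp := k_gt0 hb1 hk.
have := walk_prev mm_inv hmin (j := k); rewrite kp leqnn X /= => /(_ isT) [_].
rewrite -covN => eN.
have eNp : e \notin covered Np by rewrite covNp negbK.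
have allN : forall v, v \in C -> v \in covered N.
  move=> v vC; case: (C_cases vC) => [->|->|/andP[] //]; first exact: bN.
  by rewrite X.
pose S := swap Np N C.
have hS : is_matching gp S.
  apply: (swap_matching gpi gi mNp mN).
  - by [].
  - by move=> u v /hgg.
have hC : forall v, v \in C -> (mate Np v \in C) && (mate N v \in C).
  by move=> v vC; rewrite andbC C_closed.
have sub : b |: covered Np \subset covered S.
  apply/subsetP=> v; rewrite !inE => /orP[/eqP ->|vc].
    by rewrite (swap_cov gpi gi mNp mN hC) b_in_C.
  by rewrite (swap_cov gpi gi mNp mN hC); case: ifPn => // vC; exact: allN.
have := subset_leq_card sub; rewrite cardsU1 bNp add1n.
rewrite (card_covered gpi hS) (card_covered gpi mNp) => lt.
have := hNp.2 _ hS; rewrite leqNgt => /negP; apply.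
by rewrite -(ltn_pmul2l (isT : 0 < 2)) (leq_trans _ lt) // ltnS leqnSn.
Qed.

Hypothesis hbp : owner b = p.

Lemma end_props : let e := (iter k (step mm) (b, true)).1 in
  [/\ e \in covered Np, e \notin covered N & owner e = p].
Proof.
have tE := end_type_true.
case X : (iter k (step mm) (b, true)) => [e t] /=; rewrite X /= in tE; subst t.
have hk' := hk; rewrite X /stuck /= in hk'.
have kp := k_gt0 hb1 hk.
have := walk_prev mm_inv hmin (j := k); rewrite kp leqnn X /= => /(_ isT) [_].
rewrite -covNp => eNp.
have eN : e \notin covered N by rewrite covN negbK.
have eC : e \in C by rewrite -[e]/((e, true).1) -X end_in_C.
have bC := b_in_C.
have be : b != e by apply/eqP=> be; move: bNp; rewrite be eNp.
have fNp : forall v, v \in C -> (v \in covered Np) = (v != b).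
  move=> v vC; case: (C_cases vC) => [->|->|/andP[vN vNp]].
  - by rewrite eqxx (negbTE bNp).
  - by rewrite X /= eNp eq_sym be.
  - by rewrite vNp; apply/esym/eqP => vb; move: bNp; rewrite -vb vNp.
have fN : forall v, v \in C -> (v \in covered N) = (v != e).
  move=> v vC; case: (C_cases vC) => [->|->|/andP[vN vNp]].
  - by rewrite bN be.
  - by rewrite X /= eqxx (negbTE eN).
  - by rewrite vN; apply/esym/eqP => ve; move: eN; rewrite -ve vN.
split=> //.
case: (boolP (e \in W)) => eW; first exact: hW.
have CW : forall v, v \in C -> v \notin W.
  move=> v vC; case: (eqVneq v e) => [->//|ve].
  have vN : v \in covered N by rewrite fN.
  exact: hgW (mate_r gs gi mN vN).
apply/eqP/negPn/negP => ap.
have hC1 := C_closed.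
have hC2 : forall v, v \in C -> (mate Np v \in C) && (mate N v \in C).
  by move=> v vC; rewrite andbC C_closed.
pose S1 := swap N Np C.
have hS1 : is_matching g S1.
  apply: (swap_matching gi gpi mN mNp) => // u v guv uC vC.
  by apply: hgpg; rewrite ?CW.
pose S2 := swap Np N C.
have hS2 : is_matching gp S2.
  apply: (swap_matching gpi gi mNp mN) => // u v /hgg //.
have cov1 : b |: covered S1 = e |: covered N.
  apply/setP=> v; rewrite !inE (swap_cov gi gpi mN mNp hC1).
  case: (boolP (v \in C)) => vC; first by rewrite (fNp _ vC) (fN _ vC); case: eqP; case: eqP.
  have -> : (v == b) = false by apply/negbTE; apply: contraNneq vC => ->.
  by have -> : (v == e) = false by apply/negbTE; apply: contraNneq vC => ->.
have cov2 : e |: covered S2 = b |: covered Np.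
  apply/setP=> v; rewrite !inE (swap_cov gpi gi mNp mN hC2).
  case: (boolP (v \in C)) => vC; first by rewrite (fNp _ vC) (fN _ vC); case: eqP; case: eqP.
  have -> : (v == b) = false by apply/negbTE; apply: contraNneq vC => ->.
  by have -> : (v == e) = false by apply/negbTE; apply: contraNneq vC => ->.
have bS1 : b \notin covered S1 by rewrite (swap_cov gi gpi mN mNp hC1) bC.
have eS2 : e \notin covered S2 by rewrite (swap_cov gpi gi mNp mN hC2) eC.
have max1 : maximum_matching g S1.
  split=> // N'' hN''; apply: leq_trans (hN.2 _ hN'') _.
  have : #|b |: covered S1| = #|e |: covered N| by rewrite cov1.
  rewrite !cardsU1 bS1 eN /= => /eqP.
  by rewrite eqn_add2l (card_covered gi hS1) (card_covered gi mN) eqn_pmul2l // => /eqP ->.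
have max2 : maximum_matching gp S2.
  split=> // N'' hN''; apply: leq_trans (hNp.2 _ hN'') _.
  have : #|e |: covered S2| = #|b |: covered Np| by rewrite cov2.
  rewrite !cardsU1 eS2 bNp /= => /eqP.
  by rewrite eqn_add2l (card_covered gpi hS2) (card_covered gpi mNp) eqn_pmul2l // => /eqP ->.
have l1 : index p s < index (owner e) s.
  apply: (lex_shift (f := nmatched owner N) (g := nmatched owner S1)) => //.
    move=> q; rewrite [q == p]eq_sym -hbp [q == owner e]eq_sym.
    exact: nm_shift.
  exact: hNlex.
have l2 : index (owner e) sp < index p sp.
  apply: (lex_shift (f := nmatched owner Np) (g := nmatched owner S2)) => //.
      by rewrite eq_sym.
    move=> q; rewrite [q == owner e]eq_sym [q == p]eq_sym -hbp.
    exact: nm_shift.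
  exact: hNplex.
exact: hord ap l1 l2.
Qed.

End Walk1.

Definition KK := #|{: V * bool}|.
Definition Rb (b e : V) : bool :=
  [exists k : 'I_KK, [&& stuck mm (iter k (step mm) (b, true)),
     [forall j : 'I_KK, (j < k) ==> ~~ stuck mm (iter j (step mm) (b, true))] &
     iter k (step mm) (b, true) == (e, true)]].
Definition Bset := [set b | [&& b \in covered N, b \notin covered Np & owner b == p]].
Definition Eset := [set e | [&& e \in covered Np, e \notin covered N & owner e == p]].

Lemma exR b : b \in Bset -> exists e, Rb b e && (e \in Eset).
Proof.
rewrite inE => /and3P[bN bNp /eqP bp].
have hb0 : mm false b = b by apply/eqP/negbNE; rewrite -covNp.
have [k0 /andP[k0K sk0]] := exists_stuck mm_inv hb0.
have ex : exists k, stuck mm (iter k (step mm) (b, true)) by exists k0.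
case: (ex_minnP ex) => k hk kmin.
have kK : k < KK by apply: leq_ltn_trans (kmin _ sk0) k0K.
have hmin : forall j, j < k -> ~~ stuck mm (iter j (step mm) (b, true)).
  by move=> j jk; apply/negP => /kmin; rewrite leqNgt jk.
have tE := end_type_true bN bNp hmin hk.
have [eNp eN ep] := end_props bN bNp hmin hk bp.
exists (iter k (step mm) (b, true)).1; apply/andP; split; last by rewrite inE eNp eN ep eqxx.
apply/existsP; exists (Ordinal kK); rewrite /= hk /=; apply/andP; split.
  apply/forallP=> j; apply/implyP => jk; exact: hmin.
by apply/eqP; move: tE; case: (iter k (step mm) (b, true)) => v t /= ->.
Qed.

Definition phi (b : V) : V := odflt b [pick e | Rb b e && (e \in Eset)].

Lemma phiP b : b \in Bset -> Rb b (phi b) && (phi b \in Eset).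
Proof.
move=> bB; rewrite /phi; case: pickP => [e -> //|H].
by have [e] := exR bB; rewrite H.
Qed.

Lemma Rb_inj b b' e : b \in Bset -> b' \in Bset -> Rb b e -> Rb b' e -> b = b'.
Proof.
rewrite !inE => /and3P[bN bNp _] /and3P[bN' bNp' _].
have hb0 : mm false b = b by apply/eqP/negbNE; rewrite -covNp.
have hb0' : mm false b' = b' by apply/eqP/negbNE; rewrite -covNp.
have hb1 : mm true b != b by rewrite -covN.
have hb1' : mm true b' != b' by rewrite -covN.
case/existsP=> k /and3P[sk /forallP mk /eqP Ek].
case/existsP=> k' /and3P[sk' /forallP mk' /eqP Ek'].
apply: (walk_inj mm_inv hb0 hb1 hb0' hb1' _ _ sk sk'); last by rewrite Ek Ek'.
  move=> j jk; have jK : j < KK by apply: ltn_trans jk (ltn_ord k).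
  by have := mk (Ordinal jK); rewrite /= jk.
move=> j jk; have jK : j < KK by apply: ltn_trans jk (ltn_ord k').
by have := mk' (Ordinal jK); rewrite /= jk.
Qed.

Lemma key : nmatched owner N p <= nmatched owner Np p.
Proof.
rewrite /nmatched.
set A := [set v in covered N | owner v == p].
set Ap := [set v in covered Np | owner v == p].
set Bo := [set v in covered N :&: covered Np | owner v == p].
have h1 : A \subset Bo :|: Bset.
  apply/subsetP=> v; rewrite !inE => /andP[vN ->]; rewrite vN /=.
  by case: (v \in covered Np).
have h2 : Bo :|: Eset \subset Ap.
  apply/subsetP=> v; rewrite !inE => /orP[/andP[/andP[_ ->] ->] //|/and3P[-> _ ->]] //.
have h3 : Bo :&: Eset = set0.
  apply/setP=> v; rewrite !inE; by case: (v \in covered N); rewrite ?andbF.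
have h4 : #|Bset| <= #|Eset|.
  rewrite -(card_in_imset (f := phi)); last first.
    move=> b b' bB b'B E; apply: (Rb_inj bB b'B (e := phi b)).
      by case/andP: (phiP bB).
    by rewrite E; case/andP: (phiP b'B).
  apply: subset_leq_card; apply/subsetP=> e /imsetP[b bB ->].
  by case/andP: (phiP bB).
have c1 : #|A| <= #|Bo| + #|Bset|.
  by apply: leq_trans (subset_leq_card h1) _; rewrite cardsU leq_subr.
have c2 : #|Bo| + #|Eset| <= #|Ap|.
  by apply: leq_trans (subset_leq_card h2); rewrite cardsU h3 cards0 subn0.
exact: leq_trans c1 (leq_trans (leq_add (leqnn _) h4) c2).
Qed.

End Key.


Section Final.
Variables (n : nat) (V : finType) (owner : V -> 'I_n) (adj : rel V).
Hypotheses (adj_sym : symmetric adj) (adj_irr : irreflexive adj).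

Lemma inc_nm (r : rel V) (rs : symmetric r) (ri : irreflexive r)
  (ro : forall u v, r u v -> owner u != owner v) M q :
  is_matching r M -> #|incident owner M q| = nmatched owner M q.
Proof.
move=> hM; rewrite /nmatched.
set D := [set v in covered M | owner v == q].
have -> : incident owner M q = [set [set v; mate M v] | v in D].
  apply/setP=> e; rewrite inE; apply/andP/imsetP.
    case=> eM /existsP[v /andP[ve /eqP vq]].
    have [E _] := mateP ri hM eM ve.
    exists v; last exact: E.
    rewrite inE vq eqxx andbT; apply/covP; by exists e.
  case=> v; rewrite inE => /andP[vc vq] ->; split; first exact: (mate_edge ri hM vc).
  by apply/existsP; exists v; rewrite !inE eqxx.
apply: card_in_imset => v w; rewrite !inE => /andP[vc /eqP vq] /andP[wc /eqP wq] E.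
have : w \in [set v; mate M v] by rewrite E !inE eqxx.
rewrite !inE => /orP[/eqP -> //|/eqP wm].
have := ro _ _ (mate_r rs ri hM vc); rewrite -wm vq wq eqxx //.
Qed.

Lemma ext_sym R M : symmetric (ext_rem owner adj R M).
Proof.
move=> u v; rewrite /ext_rem /extr adj_sym [owner v == _]eq_sym.
by case: (u \in R); case: (v \in R); case: (adj v u); case: (owner u == owner v);
   case: (u \in all_covered M); case: (v \in all_covered M).
Qed.

Lemma ext_irr R M : irreflexive (ext_rem owner adj R M).
Proof. by move=> u; rewrite /ext_rem /extr adj_irr !andbF. Qed.

Lemma ext_own R M u v : ext_rem owner adj R M u v -> owner u != owner v.
Proof. by case/and3P=> /and4P[]. Qed.

Lemma matching_mono (r r' : rel V) M : (forall u v, r u v -> r' u v) ->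
  is_matching r M -> is_matching r' M.
Proof.
move=> hr /andP[/forallP H1 H2]; apply/andP; split=> //.
apply/forallP=> e; apply/implyP=> eM; have := H1 e; rewrite eM /=.
case/existsP=> u /existsP[v /andP[ruv E]].
by apply/existsP; exists u; apply/existsP; exists v; rewrite hr.
Qed.

Lemma edge_in (r : rel V) M e (X : {set V}) : (forall u v, r u v -> (u \in X) && (v \in X)) ->
  is_matching r M -> e \in M -> e \subset X.
Proof.
move=> hX /andP[/forallP H1 _] eM; have := H1 e; rewrite eM /=.
case/existsP=> u /existsP[v /andP[ruv /eqP ->]].
by rewrite subUset !sub1set; apply: hX.
Qed.

Lemma cov_in (r : rel V) M (X : {set V}) : (forall u v, r u v -> (u \in X) && (v \in X)) ->
  is_matching r M -> covered M \subset X.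
Proof.
move=> hX hM; apply/subsetP=> v /covP[e eM ve].
exact: (subsetP (edge_in hX hM eM)).
Qed.

Lemma covU (M1 M2 : {set {set V}}) v : (v \in covered (M1 :|: M2)) = (v \in covered M1) || (v \in covered M2).
Proof.
apply/idP/orP.
  case/covP=> e; rewrite inE => /orP[] eM ve; [left|right]; apply/covP; by exists e.
by case=> /covP[e eM ve]; apply/covP; exists e; rewrite // inE eM ?orbT.
Qed.

Lemma allcovP (M : profile n V) v : reflect (exists q, v \in covered (M q)) (v \in all_covered M).
Proof. by apply: (iffP bigcupP) => [[q _ ?]|[q ?]]; exists q. Qed.

Lemma upd_p (M : profile n V) p X : upd M p X p = X.
Proof. by rewrite /upd ffunE eqxx. Qed.
Lemma upd_q (M : profile n V) p X q : q != p -> upd M p X q = M q.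
Proof. by move=> qp; rewrite /upd ffunE (negbTE qp). Qed.

End Final.

Unset Implicit Arguments. Set Strict Implicit.

Lemma match0 (V : finType) (r : rel V) : is_matching r set0.
Proof. by apply/andP; split; apply/forallP=> e; rewrite inE. Qed.

Lemma sorted_idx (T : eqType) (f : T -> nat) (s : seq T) x y :
  sorted (fun q q' => f q' <= f q) s -> x \in s -> y \in s ->
  index x s < index y s -> f y <= f x.
Proof.
move=> ss xs ys lt.
have tr : transitive (fun q q' => f q' <= f q).
  by move=> b a c /= h1 h2; apply: leq_trans h2 h1.
have := sorted_ltn_nth tr x ss; move=> /(_ (index x s) (index y s)).
by rewrite !inE !index_mem !nth_index // => /(_ xs ys lt).
Qed.

Theorem lemma1 (n : nat) (V : finType) (owner : V -> 'I_n) (adj : rel V)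
    (adj_sym : symmetric adj) (adj_irr : irreflexive adj)
    (A : {set V} -> profile n V -> {set {set V}})
    (hA : lex_IA owner adj A)
    (p : 'I_n) (Mopp : profile n V)
    (hMopp : forall q, q != p -> is_matching (intr owner adj setT q) (Mopp q))
    (V' : {set V}) (hV' : V' \subset [set v | owner v == p]) :
  best_utility owner adj A setT Mopp p >=
    2 * nu (intr owner adj V' p) + best_utility owner adj A (~: V') Mopp p.
Proof.
have hW : forall v, v \in V' -> owner v = p.
  by move=> v vV; have := subsetP hV' v vV; rewrite inE => /eqP.
have irr : forall R q, irreflexive (intr owner adj R q).
  by move=> R q u; rewrite /intr adj_irr !andbF.
case: (eqVneq V' set0) => [V0|Vn0].
  subst V'.
  have -> : nu (intr owner adj set0 p) = 0.
    apply/eqP; rewrite -leqn0; apply/bigmax_leqP => N hN.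
    rewrite leqn0 cards_eq0; apply/eqP/setP=> e; rewrite inE; apply/negP => eN.
    have [u [w [ruw _ _]]] := edgeP (irr _ _) hN eN.
    by move: ruw; rewrite /intr inE.
  by rewrite setC0 muln0 add0n.
have [v0 v0V] := set0Pn _ Vn0.
have [Nint hNint Enu] : exists2 N, is_matching (intr owner adj V' p) N &
    nu (intr owner adj V' p) = #|N|.
  exists [arg max_(N > set0 | is_matching (intr owner adj V' p) N) #|N|].
    by case: arg_maxnP => //; exact: match0.
  rewrite /nu; apply: bigmax_eq_arg; exact: match0.
have [Mp hMp Ebest] : exists2 M, is_matching (intr owner adj (~: V') p) M &
    best_utility owner adj A (~: V') Mopp p = utility owner A (~: V') (upd Mopp p M) p.
  exists [arg max_(M > set0 | is_matching (intr owner adj (~: V') p) M)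
           utility owner A (~: V') (upd Mopp p M) p].
    by case: arg_maxnP => //; exact: match0.
  rewrite /best_utility; apply: bigmax_eq_arg; exact: match0.
rewrite Enu Ebest.
set Mh := upd Mopp p Mp.
set Mf := upd Mopp p (Mp :|: Nint).
have MpX : covered Mp \subset ~: V'.
  by apply: (cov_in _ hMp) => u v /and5P[-> ->].
have NX : covered Nint \subset V'.
  by apply: (cov_in _ hNint) => u v /and5P[-> ->].
have hMf : is_matching (intr owner adj setT p) (Mp :|: Nint).
  apply/andP; split.
    have mono : forall R u v, intr owner adj R p u v -> intr owner adj setT p u v.
      by move=> R u v /and5P[_ _ *]; rewrite /intr !inE; apply/and5P.
    have /andP[/forallP h1 _] := matching_mono (mono _) hMp.
    have /andP[/forallP h2 _] := matching_mono (mono _) hNint.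
    apply/forallP=> e; apply/implyP; rewrite inE => /orP[] eM.
      by have := h1 e; rewrite eM.
    by have := h2 e; rewrite eM.
  apply/forallP=> e1; apply/implyP=> e1M; apply/forallP=> e2; apply/implyP=> e2M.
  apply/implyP=> ne.
  move: e1M e2M; rewrite !inE => /orP[] e1M /orP[] e2M.
  - exact: match_disj hMp e1M e2M ne.
  - rewrite disjoint_subset; apply/subsetP=> x xe1; rewrite !inE.
    apply/negP=> xe2.
    have h1 : x \in V' by apply: (subsetP NX); apply/covP; exists e2.
    have : x \in ~: V' by apply: (subsetP MpX); apply/covP; exists e1.
    by rewrite inE h1.
  - rewrite disjoint_subset; apply/subsetP=> x xe1; rewrite !inE.
    apply/negP=> xe2.
    have h1 : x \in V' by apply: (subsetP NX); apply/covP; exists e1.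
    have : x \in ~: V' by apply: (subsetP MpX); apply/covP; exists e2.
    by rewrite inE h1.
  - exact: match_disj hNint e1M e2M ne.
apply: leq_trans (leq_bigmax_cond _ hMf).
rewrite /utility !upd_p -/Mh -/Mf.
have cardU : #|Mp :|: Nint| = #|Mp| + #|Nint|.
  rewrite cardsU; have -> : Mp :&: Nint = set0; last by rewrite cards0 subn0.
  apply/setP=> e; rewrite !inE; apply/negP=> /andP[eM eN].
  have [u [w [ruw _ E]]] := edgeP (irr _ _) hMp eM.
  have : u \in covered Nint by apply/covP; exists e; rewrite // E !inE eqxx.
  move/(subsetP NX); have : u \in covered Mp by apply/covP; exists e; rewrite // E !inE eqxx.
  by move/(subsetP MpX); rewrite inE => /negbTE ->.
rewrite cardU.
suff key_ineq : #|incident owner (A (~: V') Mh) p| <= #|incident owner (A setT Mf) p|.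
  by rewrite mulnDr addnCA -addnA !leq_add2l.


have acs : forall v, v \in all_covered Mh -> v \in all_covered Mf.
  move=> v /allcovP[q]; case: (eqVneq q p) => [->|qp].
    by rewrite upd_p => vc; apply/allcovP; exists p; rewrite upd_p covU vc.
  by rewrite upd_q // => vc; apply/allcovP; exists q; rewrite upd_q.
have acsup : forall v, v \in all_covered Mf -> v \notin V' -> v \in all_covered Mh.
  move=> v /allcovP[q]; case: (eqVneq q p) => [->|qp].
    rewrite upd_p covU => /orP[vc|vc] vV; first by apply/allcovP; exists p; rewrite upd_p.
    by have := subsetP NX v vc; rewrite (negbTE vV).
  by rewrite upd_q // => vc _; apply/allcovP; exists q; rewrite upd_q.
have vh : valid_profile owner adj (~: V') Mh.
  move=> q; case: (eqVneq q p) => [->|qp]; first by rewrite upd_p.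
  rewrite upd_q //; apply: matching_mono (hMopp q qp) => u v /and5P[_ _ a ou ov].
  rewrite /intr !inE a ou ov !andbT /=.
  apply/andP; split; apply/negP => /hW; [move: ou | move: ov] => /eqP -> E;
    by rewrite E eqxx in qp.
have vf : valid_profile owner adj setT Mf.
  move=> q; case: (eqVneq q p) => [->|qp]; first by rewrite upd_p.
  by rewrite upd_q //; apply: hMopp.
have [s [ps ss maxN lexN]] := hA _ _ vh.
have [sp [psp ssp maxNp lexNp]] := hA _ _ vf.
set g := ext_rem owner adj (~: V') Mh.
set gp := ext_rem owner adj setT Mf.
rewrite (inc_nm (ext_sym owner adj_sym _ _) (ext_irr owner adj_irr _ _) (@ext_own _ _ owner adj _ _) _ maxN.1).
rewrite (inc_nm (ext_sym owner adj_sym _ _) (ext_irr owner adj_irr _ _) (@ext_own _ _ owner adj _ _) _ maxNp.1).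
have hgg : forall u v, g u v -> gp u v.
  move=> u v /and3P[/and4P[uV vV a o] uc vc]; rewrite /gp /ext_rem /extr !inE a o /=.
  move: uV vV; rewrite !inE => uV vV.
  by apply/andP; split; apply/negP => /acsup; [move/(_ uV); rewrite (negbTE uc)|move/(_ vV); rewrite (negbTE vc)].
have hgW : forall u v, g u v -> u \notin V'.
  by move=> u v /and3P[/and4P[uV _ _ _] _ _]; rewrite inE in uV.
have hgpg : forall u v, gp u v -> u \notin V' -> v \notin V' -> g u v.
  move=> u v /and3P[/and4P[_ _ a o] uc vc] uV vV; rewrite /g /ext_rem /extr !inE a o uV vV /=.
  by apply/andP; split; apply/negP=> /acs; [rewrite (negbTE uc) | rewrite (negbTE vc)].
have hs : forall q, q \in s by move=> q; rewrite (perm_mem ps) mem_enum.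
have hsp : forall q, q \in sp by move=> q; rewrite (perm_mem psp) mem_enum.
have hord : forall a, a != p -> index p s < index a s -> index a sp < index p sp -> False.
  move=> a ap l1 l2.
  have i1 := @sorted_idx _ _ _ p a ss (hs p) (hs a) l1.
  have i2 := @sorted_idx _ _ _ a p ssp (hsp a) (hsp p) l2.
  have e1 : nrevealed owner setT a = nrevealed owner (~: V') a.
    rewrite /nrevealed; apply: eq_card => v; rewrite !inE.
    case: (eqVneq (owner v) a) => [oa|]; rewrite ?andbF ?andbT //.
    apply/esym/negP => vV; have := hW _ vV; rewrite oa => E; by rewrite E eqxx in ap.
  have e2 : nrevealed owner (~: V') p < nrevealed owner setT p.
    rewrite /nrevealed; apply: proper_card; apply/properP; split.
      by apply/subsetP=> v; rewrite !inE => /andP[_ ->].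
    by exists v0; rewrite !inE ?v0V ?hW ?eqxx.
  by have := leq_trans (leq_ltn_trans i1 e2) i2; rewrite e1 ltnn.
exact: (key (ext_sym owner adj_sym _ _) (ext_irr owner adj_irr _ _) (ext_irr owner adj_irr _ _)
  hgg hgW hgpg hW hs hsp hord maxN lexN maxNp lexNp).
Qed.
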